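(* Let $F|R$ be an extension of ordered fields with canonical valuation $v$ and assume that $vR$ is not a convex subgroup of $vF$. Then there is no injective map $\tilde\iota:\mathcal C(R)\to\mathcal C(F)$ that is continuous with respect to the full topologies and compatible with restriction.
   Context: The canonical valuation $v$ of an ordered field has as valuation ring the convex hull of $\mathbb Z$. For an ordered field $K$, a cut is a pair $(D,E)$ with $D<E$, $D\cup E=K$; $\mathcal C(K)$ is the set of cuts, ordered by $(D_1,E_1)<(D_2,E_2)$ iff $D_1\subsetneq D_2$. For nonempty $A\subseteq K$, $A^+=(D,K\setminus D)$ with $D$ the smallest initial segment containing $A$, and $A^-=(K\setminus E,E)$ with $E$ the smallest final segment containing $A$. For $a\in K$ and a final segment $S$ of $vK$ (possibly empty), $B_S(a,K)=\{b\in K\mid v(a-b)\in S\cup\{\infty\}\}$ is a ball. Two cuts are equivalent if they are equal or are $B^-$ and $B^+$ for the same ball $B$; a subset of $\mathcal C(K)$ is full if closed under equivalence. The interval topology on $\mathcal C(K)$ has basic open sets $(C_1,C_2)$, $(C_1,(K,\emptyset)]$, $[(\emptyset,K),C_2)$; the full topology consists of all full sets open in the interval topology. Restriction of a cut $(D',E')$ of $F$ to $R$ is $(D'\cap R,E'\cap R)$; $\tilde\iota$ is compatible with restriction if the restriction of $\tilde\iota(C)$ is $C$ for all $C$. *)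

(* Defs.v *)
From HB Require Import structures.
From mathcomp Require Import all_boot all_order all_algebra.
Set Implicit Arguments. Unset Strict Implicit. Unset Printing Implicit Defensive.
Import Order.TTheory GRing.Theory Num.Theory.
Local Open Scope ring_scope.

Section Defs.
Variable K : realFieldType.

(* Canonical valuation (valuation ring = convex hull of Z):
   [vle x y] means v(x) <= v(y), i.e. y/x lies in the convex hull of Z
   (with v(0) = oo). *)
Definition vle (x y : K) : Prop := exists n : nat, `|y| <= n%:R * `|x|.

(* Cuts (D,E) are represented by their lower part D, an initial segment;
   E is its complement. *)
Definition initial (D : K -> Prop) : Prop := forall x y, y <= x -> D x -> D y.

Record cut := Cut { cutD : K -> Prop; cutP : initial cutD }.

Definition cut_lt (C1 C2 : cut) : Prop :=
  (forall x, cutD C1 x -> cutD C2 x) /\ exists x, cutD C2 x /\ ~ cutD C1 x.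
Definition cut_le (C1 C2 : cut) : Prop := C1 = C2 \/ cut_lt C1 C2.

Lemma initial_top : initial (fun _ => True). Proof. by []. Qed.
Lemma initial_bot : initial (fun _ => False). Proof. by []. Qed.
Definition cut_top : cut := Cut initial_top.
Definition cut_bot : cut := Cut initial_bot.

Definition plusD (A : K -> Prop) : K -> Prop := fun x => exists2 a, A a & x <= a.
Lemma plusD_initial A : initial (plusD A).
Proof. by move=> x y yx [a Aa xa]; exists a => //; exact: le_trans yx xa. Qed.
Definition cut_plus (A : K -> Prop) : cut := Cut (@plusD_initial A).

(* A^- : E = smallest final segment containing A, D = K \ E *)
Definition minusD (A : K -> Prop) : K -> Prop :=
  fun x => ~ exists2 a, A a & a <= x.
Lemma minusD_initial A : initial (minusD A).
Proof. by move=> x y yx H [a Aa ay]; apply: H; exists a => //; exact: le_trans ay yx. Qed.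
Definition cut_minus (A : K -> Prop) : cut := Cut (@minusD_initial A).

(* Final segments S of the value group vK (possibly empty), represented by
   the set of nonzero elements whose value lies in S. *)
Definition value_final_segment (S : K -> Prop) : Prop :=
  (forall x, S x -> x != 0) /\
  (forall x y, S x -> y != 0 -> vle x y -> S y).

(* B_S(a,K) = { b | v(a-b) \in S \cup {oo} } *)
Definition ball_of (a : K) (S : K -> Prop) : K -> Prop :=
  fun b => a - b = 0 \/ S (a - b).

Definition is_ball (B : K -> Prop) : Prop :=
  exists a S, value_final_segment S /\ forall b, B b <-> ball_of a S b.

Definition cut_equiv (C1 C2 : cut) : Prop :=
  C1 = C2 \/
  exists B, is_ball B /\
    ((C1 = cut_minus B /\ C2 = cut_plus B) \/ (C1 = cut_plus B /\ C2 = cut_minus B)).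

Definition full (U : cut -> Prop) : Prop :=
  forall C1 C2, cut_equiv C1 C2 -> U C1 -> U C2.

Definition interval_basic (N : cut -> Prop) : Prop :=
  exists C1 C2,
    (forall C, N C <-> cut_lt C1 C /\ cut_lt C C2) \/
    (forall C, N C <-> cut_lt C1 C /\ cut_le C cut_top) \/
    (forall C, N C <-> cut_le cut_bot C /\ cut_lt C C2).

Definition interval_open (U : cut -> Prop) : Prop :=
  forall C, U C -> exists N, interval_basic N /\ N C /\ (forall C', N C' -> U C').

Definition full_open (U : cut -> Prop) : Prop := full U /\ interval_open U.

End Defs.

Arguments cut K : clear implicits.

Definition full_continuous (R F : realFieldType) (g : cut R -> cut F) : Prop :=
  forall U : cut F -> Prop, full_open U -> full_open (fun C => U (g C)).

(* the restriction (D' \cap R, E' \cap R) of iota C to R (via the embedding f)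
   equals C *)
Definition compatible_restriction (R F : realFieldType) (f : R -> F)
  (iota : cut R -> cut F) : Prop :=
  forall (C : cut R) (x : R), cutD (iota C) (f x) <-> cutD C x.

(* vR is a convex subset of vF (vR = image of R^x under the canonical
   valuation of F, which restricts to the canonical valuation of R). *)
Definition value_group_convex (R F : realFieldType) (f : R -> F) : Prop :=
  forall x : F, x != 0 -> forall r1 r2 : R, r1 != 0 -> r2 != 0 ->
    vle (f r1) x -> vle x (f r2) ->
    exists r : R, r != 0 /\ vle x (f r) /\ vle (f r) x.

(* Main.v *)
Require Import Defs.
From HB Require Import structures.
From mathcomp Require Import all_boot all_order all_algebra.
From mathcomp Require Import ring lra.
From Stdlib Require Import Classical.
Import Order.TTheory GRing.Theory Num.Theory.
Local Open Scope ring_scope.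

Section Gen.
Context {K : realFieldType}.

Definition cgroup (G : K -> Prop) :=
  [/\ G 0, (forall z w, G z -> `|w| <= `|z| -> G w) &
      (forall z w, G z -> G w -> G (z + w))].

Lemma cgN {G} : cgroup G -> forall z, G z -> G (- z).
Proof. by case=> _ hc _ z Gz; apply: hc Gz _; rewrite normrN lexx. Qed.

Lemma cgB {G} : cgroup G -> forall z w, G z -> G w -> G (z - w).
Proof. move=> cg z w Gz Gw; have [_ _ hD] := cg; apply: hD => //; exact: cgN. Qed.

Lemma between_norm {p w q : K} : p <= w -> w <= q -> `|w| <= `|p| \/ `|w| <= `|q|.
Proof.
move=> pw wq; have := ler_norm q; have := ler_norm (- p); rewrite normrN.
case: (lerP 0 w) => hw.
- by rewrite (ger0_norm hw) => _ hq; right; lra.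
- by rewrite (ltr0_norm hw) => hp _; left; lra.
Qed.

Lemma cg_small {G} {w y : K} : cgroup G -> ~ G w -> G y -> `|y| + `|y| < `|w|.
Proof.
move=> [G0 Gc GD] nw Gy; rewrite ltNge; apply/negP => h; apply: nw.
apply: (Gc (y + y)); first exact: GD.
by rewrite -mulr2n normrMn mulr2n.
Qed.

Lemma cg_conv {G} {p w q : K} : cgroup G -> G p -> G q -> p <= w -> w <= q -> G w.
Proof.
move=> [_ Gc _] Gp Gq pw wq.
by case: (between_norm pw wq) => h; [exact: Gc Gp h | exact: Gc Gq h].
Qed.

Lemma cut_init {C : cut K} {x y} : y <= x -> cutD C x -> cutD C y.
Proof. exact: cutP. Qed.

Definition pcut (t : K) : cut K := cut_plus (fun y => y = t).

Lemma pcutE t z : cutD (pcut t) z <-> z <= t.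
Proof. by split; [case=> a -> | move=> h; exists t]. Qed.

Lemma cut_lt_trans (C1 C2 C3 : cut K) : cut_lt C1 C2 -> cut_lt C2 C3 -> cut_lt C1 C3.
Proof.
move=> [h12 [x [x2 nx1]]] [h23 _]; split; first by move=> z /h12 /h23.
by exists x; split => //; apply: h23.
Qed.

Lemma lt_pcut (C : cut K) t : ~ cutD C t -> cut_lt C (pcut t).
Proof.
move=> nt; split; last by exists t; split => //; apply/pcutE.
move=> z Cz; apply/pcutE; rewrite leNgt; apply/negP => tz.
by apply: nt; apply: cut_init Cz; apply: ltW.
Qed.

Lemma pcut_lt_top t : cut_lt (pcut t) (cut_top K).
Proof. split => //; exists (t + 1); split => //; move/pcutE; lra. Qed.

Lemma bot_lt_pcut t : cut_lt (cut_bot K) (pcut t).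
Proof. split => //; exists t; split => //; exact/pcutE. Qed.

Lemma mD_neg {G} : cgroup G -> forall t, minusD G t -> t < 0.
Proof. move=> [G0 _ _] t h; rewrite ltNge; apply/negP => t0; apply: h; by exists 0. Qed.

Lemma mD_half {G} : cgroup G -> forall t, minusD G t -> minusD G (t / 2).
Proof.
move=> [G0 Gc GD] t h [a Ga ha]; apply: h; exists (a + a); first exact: GD.
lra.
Qed.

Lemma plt_minus {G} : cgroup G -> forall t, minusD G t -> cut_lt (pcut t) (cut_minus G).
Proof.
move=> cg t ht; split.
- move=> z /pcutE zt; exact: (@cut_init (cut_minus G) _ _ zt ht).
- exists (t / 2); split; first exact: mD_half.
  have := mD_neg cg _ ht; move=> tn /pcutE; lra.
Qed.

Lemma pcut_lt_plus {G} {b e : K} : cgroup G -> G b -> G e -> e != 0 ->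
  cut_lt (pcut b) (cut_plus G).
Proof.
move=> [G0 Gc GD] Gb Ge e0; split.
- by move=> z /pcutE zb; exists b.
- exists (b + `|e|); split.
  + exists (b + `|e|); last exact: lexx.
    apply: GD => //; apply: (Gc e) => //; by rewrite normr_id lexx.
  + have : 0 < `|e| by rewrite normr_gt0.
    move=> he /pcutE; lra.
Qed.

Lemma open_gen (Phi : K -> K -> Prop) :
  (forall p q q', Phi p q -> p <= q' -> q' <= q -> Phi p q') ->
  interval_open (fun C : cut K => exists p q, cutD C p /\ ~ cutD C q /\ Phi p q).
Proof.
move=> hPhi C [p [q [Cp [Cq Ph]]]].
pose N := fun C' => cut_lt (cut_minus (fun y => y = p)) C' /\ cut_lt C' (pcut q).
exists N; split.
  exists (cut_minus (fun y => y = p)), (pcut q); left; move=> C'; exact: iff_refl.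
split.
- split; last exact: lt_pcut.
  split.
  + move=> z hz.
    have zp : z <= p.
      rewrite leNgt; apply/negP => pz; apply: hz; exists p => //; exact: ltW.
    exact: cut_init zp Cp.
  + exists p; split => //; move=> h; apply: h; exists p => //; exact: lexx.
- move=> C' [[_ [z [C'z nz]]] [_ [w [/pcutE wq nC'w]]]].
  have pz : p <= z.
    apply: NNPP => h; apply: nz => -[a ap az]; apply: h; by rewrite -ap.
  have C'p : cutD C' p := cut_init pz C'z.
  have pw : p <= w.
    rewrite leNgt; apply/negP => wp; apply: nC'w; apply: cut_init C'p; exact: ltW.
  exists p, w; split => //; split => //; exact: hPhi Ph pw wq.
Qed.

Lemma ball_cg {W : K -> Prop} : is_ball W ->
  exists I, cgroup I /\ exists a, forall b, W b <-> I (a - b).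
Proof.
move=> [a [S [[S0 Sf] hW]]].
exists (fun z => z = 0 \/ S z); split; last by exists a.
split; first by left.
- move=> z w [->|Sz] hwz.
  + left; apply/eqP; by rewrite -normr_le0 -(normr0 K).
  + case: (eqVneq w 0) => [->|w0]; first by left.
    right; apply: (Sf z w Sz w0); exists 1%N; by rewrite mulr1n mul1r.
- move=> z w.
  wlog hzw : z w / `|w| <= `|z|.
    move=> hyp hz hw; case: (lerP `|w| `|z|) => h; first exact: hyp.
    rewrite addrC; apply: hyp => //; exact: ltW.
  case=> [z0|Sz] hw.
  + left; move: hzw; rewrite z0 normr0 normr_le0 => /eqP ->; by rewrite addr0.
  + case: (eqVneq (z + w) 0) => [->|nz]; first by left.
    right; apply: (Sf z (z + w) Sz nz); exists 2%N.
    have := ler_normD z w; lra.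
Qed.

Lemma recenter {I} {a} {W : K -> Prop} {w0} : cgroup I ->
  (forall b, W b <-> I (a - b)) -> W w0 -> forall b, W b <-> I (w0 - b).
Proof.
move=> cg hW /hW Iw b; rewrite hW; have [_ _ ID] := cg; split => h.
- have -> : w0 - b = (a - b) - (a - w0) by ring. exact: cgB.
- have -> : a - b = (w0 - b) + (a - w0) by ring. exact: ID.
Qed.

Lemma full_G {G} : cgroup G ->
  full (fun C : cut K => exists p q, cutD C p /\ ~ cutD C q /\ G p /\ G q).
Proof.
move=> cg C1 C2 [<-//|[W [hW hC]]].
have [I [cgI [a hWa]]] := ball_cg hW.
have [G0 Gc GD] := cg; have [I0 Ic ID] := cgI.
case: hC => [[-> ->]|[-> ->]] /=.
- move=> [p [q [hp [hq [Gp Gq]]]]].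
  have [w0 Ww0 w0q] : exists2 w0, W w0 & w0 <= q by apply: NNPP.
  have pw0 : p < w0 by rewrite ltNge; apply/negP => h; apply: hp; exists w0.
  have Gw0 : G w0 := cg_conv cg Gp Gq (ltW pw0) w0q.
  have hWc := recenter cgI hWa Ww0.
  exists w0, (w0 + (w0 - p)); split; first by exists w0 => //; exact: lexx.
  split; last by split => //; apply: GD => //; exact: cgB.
  move=> [c Wc hc]; apply: hp; exists p; last exact: lexx.
  apply/hWc; move/hWc: Wc => Ic'; apply: (Ic _ _ Ic').
  rewrite (gtr0_norm (x := w0 - p)) ?subr_gt0 //.
  have := ler_norm (-(w0 - c)); rewrite normrN; lra.
- move=> [p [q [[w0 Ww0 pw0] [hq [Gp Gq]]]]].
  have w0q : w0 < q by rewrite ltNge; apply/negP => h; apply: hq; exists w0.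
  have Gw0 : G w0 := cg_conv cg Gp Gq pw0 (ltW w0q).
  have hWc := recenter cgI hWa Ww0.
  exists (w0 - (q - w0)), w0; split.
  + move=> [c Wc hc]; apply: hq; exists q; last exact: lexx.
    apply/hWc; move/hWc: Wc => Ic'; apply: (Ic _ _ Ic').
    rewrite (ltr0_norm (x := w0 - q)) ?subr_lt0 //.
    have := ler_norm (w0 - c); lra.
  + split; first by move=> h; apply: h; exists w0 => //; exact: lexx.
    split => //; apply: cgB => //; exact: cgB.
Qed.

Lemma full_Y {Y} : cgroup Y ->
  full (fun C : cut K => exists p q, cutD C p /\ ~ cutD C q /\
          (forall z, p <= z -> z <= q -> ~ Y z)).
Proof.
move=> cgY C1 C2 [<-//|[W [hW hC]]].
have [I [cgI [a hWa]]] := ball_cg hW.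
have [I0 Ic ID] := cgI.
case: hC => [[-> ->]|[-> ->]] /=.
- move=> [p [q [hp [hq hY]]]].
  have [w0 Ww0 w0q] : exists2 w0, W w0 & w0 <= q by apply: NNPP.
  have pw0 : p < w0 by rewrite ltNge; apply/negP => h; apply: hp; exists w0.
  have nYw0 : ~ Y w0 := hY w0 (ltW pw0) w0q.
  have hWc := recenter cgI hWa Ww0.
  case: (classic (I w0)) => Iw0.
  + have hWs : forall b, W b <-> I b.
      move=> b; rewrite hWc; split => h.
      * have -> : b = w0 - (w0 - b) by ring. exact: cgB.
      * exact: cgB.
    exists (- w0), (- p); split.
      exists (- w0); last exact: lexx. apply/hWs; exact: cgN.
    split.
    * move=> [c Wc hc]; apply: hp; exists (- c); last lra.
      apply/hWs; apply: (cgN cgI); exact: (proj1 (hWs c) Wc).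
    * move=> z h1 h2 Yz; apply: (hY (- z)); [lra | lra | exact: cgN].
  + have smI := cg_small cgI Iw0; have smY := cg_small cgY nYw0.
    exists w0, (w0 + `|w0| / 2); split; first by exists w0 => //; exact: lexx.
    split.
    * move=> [c Wc hc]; move/hWc: Wc => /smI h.
      have := ler_norm (- (w0 - c)); rewrite normrN; have := normr_ge0 w0; lra.
    * move=> z h1 h2 /smY h.
      have := ler_norm z; have := ler_norm (- z); rewrite normrN.
      have := normr_ge0 z.
      case: (lerP 0 w0) => hw0.
        have e : `|w0| = w0 by rewrite ger0_norm. lra.
      have e : `|w0| = - w0 by rewrite ltr0_norm. lra.
- move=> [p [q [[w0 Ww0 pw0] [hq hY]]]].
  have w0q : w0 < q by rewrite ltNge; apply/negP => h; apply: hq; exists w0.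
  have nYw0 : ~ Y w0 := hY w0 pw0 (ltW w0q).
  have hWc := recenter cgI hWa Ww0.
  case: (classic (I w0)) => Iw0.
  + have hWs : forall b, W b <-> I b.
      move=> b; rewrite hWc; split => h.
      * have -> : b = w0 - (w0 - b) by ring. exact: cgB.
      * exact: cgB.
    exists (- q), (- w0); split.
    * move=> [c Wc hc]; apply: hq; exists (- c); last lra.
      apply/hWs; apply: (cgN cgI); exact: (proj1 (hWs c) Wc).
    * split; first by move=> h; apply: h; exists (- w0); [apply/hWs; exact: cgN | exact: lexx].
      move=> z h1 h2 Yz; apply: (hY (- z)); [lra | lra | exact: cgN].
  + have smI := cg_small cgI Iw0; have smY := cg_small cgY nYw0.
    exists (w0 - `|w0| / 2), w0; split.
    * move=> [c Wc hc]; move/hWc: Wc => /smI h.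
      have := ler_norm (w0 - c); have := normr_ge0 w0; lra.
    * split; first by move=> h; apply: h; exists w0 => //; exact: lexx.
      move=> z h1 h2 /smY h.
      have := ler_norm z; have := ler_norm (- z); rewrite normrN.
      have := normr_ge0 z.
      case: (lerP 0 w0) => hw0.
        have e : `|w0| = w0 by rewrite ger0_norm. lra.
      have e : `|w0| = - w0 by rewrite ltr0_norm. lra.
Qed.

End Gen.

Section Main.
Variables (R F : realFieldType) (f : {rmorphism R -> F}).
Hypothesis fm : {mono f : x y / x <= y}.

Lemma fabs z : `|f z| = f `|z|.
Proof.
case: (lerP 0 z) => hz.
- have fz : 0 <= f z by rewrite -(rmorph0 f) fm.
  by rewrite (ger0_norm fz) (ger0_norm hz).
- have fz : f z < 0 by rewrite -(rmorph0 f) ltNge fm -ltNge.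
  by rewrite (ltr0_norm fz) (ltr0_norm hz) rmorphN.
Qed.

Lemma flt a b : (f a < f b) = (a < b).
Proof. by rewrite !ltNge fm. Qed.

Lemma XXcg (x : F) : cgroup (vle x).
Proof.
split.
- exists 0%N; rewrite normr0 mul0r; exact: lexx.
- move=> z w [n hn] hw; exists n; exact: le_trans hw hn.
- move=> z w [n hn] [m hm]; exists (n + m)%N; rewrite natrD mulrDl.
  have := ler_normD z w; lra.
Qed.

Variables (x : F) (r1 r2 : R).
Hypotheses (hx : x != 0) (h1n : r1 != 0) (h2n : r2 != 0)
  (h1 : vle (f r1) x) (h2 : vle x (f r2))
  (hno : ~ exists r : R, r != 0 /\ vle x (f r) /\ vle (f r) x).
Variable iota : cut R -> cut F.
Hypotheses (cont : full_continuous iota) (compat : compatible_restriction f iota).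

Definition BB := fun r : R => vle x (f r).
Definition YY := fun y : F => exists2 b, BB b & `|y| <= `|f b|.

Lemma BBcg : cgroup BB.
Proof.
have [X0 Xc XD] := XXcg x.
split.
- by rewrite /BB rmorph0.
- move=> z w Bz hw; apply: (Xc (f z)) Bz _; by rewrite !fabs fm.
- move=> z w Bz Bw; rewrite /BB rmorphD; exact: XD.
Qed.

Lemma key b : BB b -> `|x| <= `|f b| -> False.
Proof.
move=> Bb hb; case: (eqVneq b 0) => [b0|bn0].
- move: hb; rewrite b0 rmorph0 normr0 normr_le0 => /eqP x0.
  by move: hx; rewrite x0 eqxx.
- apply: hno; exists b; split => //; split => //.
  exists 1%N; by rewrite mulr1n mul1r.
Qed.

Lemma nB1 : ~ BB r1.
Proof. move=> hb; apply: hno; exists r1; split => //. Qed.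

Lemma YYcg : cgroup YY.
Proof.
have [B0 Bc BD] := BBcg.
split.
- exists 0 => //; rewrite rmorph0; exact: lexx.
- move=> z w [b Bb hb] hw; exists b => //; exact: le_trans hw hb.
- move=> z w [b Bb hb] [c Bc' hc]; exists (`|b| + `|c|).
  + apply: BD; [apply: (Bc b) | apply: (Bc c)] => //; by rewrite normr_id lexx.
  + rewrite fabs (ger0_norm (addr_ge0 (normr_ge0 b) (normr_ge0 c))) rmorphD -!fabs.
    have := ler_normD z w; lra.
Qed.

Lemma contra : False.
Proof.
have [B0 Bc BD] := BBcg.
have [X0 Xc XD] := XXcg x.
pose U1 := fun C : cut F => exists p q, cutD C p /\ ~ cutD C q /\ vle x p /\ vle x q.
have fo1 : full_open U1.
  split; first exact: (full_G (XXcg x)).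
  apply: open_gen => p q q' [Xp Xq] pq' q'q; split => //.
  have hq' : p <= q' /\ q' <= q by [].
  exact: (cg_conv (XXcg x) Xp Xq pq' q'q).
have ballB : is_ball BB.
  exists 0, (fun r => r != 0 /\ BB r); split.
  - split; first by move=> r [].
    move=> r s [_ Br] sn [n hn]; split => //.
    case: Br => m hm; exists (n * m)%N.
    rewrite fabs natrM -mulrA.
    apply: (@le_trans _ _ (f (n%:R * `|r|))); first by rewrite fm.
    rewrite rmorphM rmorph_nat -fabs; apply: ler_wpM2l => //; exact: ler0n.
  - move=> b; rewrite /ball_of sub0r; split.
    + move=> Bb; case: (eqVneq (- b) 0) => [->|nb]; first by left.
      right; split => //; apply: (Bc b) => //; by rewrite normrN lexx.
    + case=> [nb0|[_ Bb]].
        by move/eqP: nb0; rewrite oppr_eq0 => /eqP ->.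
      apply: (Bc (- b)) => //; by rewrite normrN lexx.
have eqB : cut_equiv (cut_plus BB) (cut_minus BB).
  right; exists BB; split => //; by right.
case: (classic (U1 (iota (cut_plus BB)))) => hQ.
- have [V1full V1open] := cont _ fo1.
  have hm : U1 (iota (cut_minus BB)) := V1full _ _ eqB hQ.
  have [N [hN [NB NV]]] := V1open _ hm.
  have [t [mt Nt]] : exists t, minusD BB t /\ N (pcut t).
    case: hN => [C1 [C2 [hN|[hN|hN]]]]; move/hN: (NB) => [l1 l2].
    + case: l1 => _ [t [mt nt]]; exists t; split => //; apply/hN; split;
        [exact: lt_pcut | exact: cut_lt_trans (plt_minus BBcg _ mt) l2].
    + case: l1 => _ [t [mt nt]]; exists t; split => //; apply/hN; split;
        [exact: lt_pcut | right; exact: pcut_lt_top].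
    + have mt : minusD BB (- `|r1|).
        move=> [a Ba ha]; apply: nB1; apply: (Bc a) Ba _.
        have := ler_norm (- a); rewrite normrN; lra.
      exists (- `|r1|); split => //; apply/hN; split;
        [right; exact: bot_lt_pcut | exact: cut_lt_trans (plt_minus BBcg _ mt) l2].
  have [p [q [hp [_ [Xp _]]]]] := NV _ Nt.
  have tn := mD_neg BBcg _ mt.
  have nft : ~ cutD (iota (pcut t)) (f (t / 2)).
    move=> /compat /pcutE h; lra.
  have pft : p < f (t / 2).
    rewrite ltNge; apply/negP => h; apply: nft; exact: cut_init h hp.
  have ft0 : f (t / 2) < 0 by rewrite -(rmorph0 f) flt; lra.
  apply: (mD_half BBcg _ mt); exists (t / 2); last exact: lexx.
  apply: (Xc p) Xp _.
  rewrite (ltr0_norm ft0) (ltr0_norm (lt_trans pft ft0)); lra.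
- pose U2 := fun C : cut F => exists p q, cutD C p /\ ~ cutD C q /\
      (forall z, p <= z -> z <= q -> ~ YY z).
  have fo2 : full_open U2.
    split; first exact: (full_Y YYcg).
    apply: open_gen => p q q' h pq' q'q z pz zq'; apply: h => //; exact: le_trans zq' q'q.
  have hQ2 : U2 (iota (cut_plus BB)).
    exists `|x|, (f `|r1|); split; [|split].
    + apply: NNPP => hn; apply: hQ; exists 0, `|x|; split; [|split => //; split => //].
      * have : cutD (iota (cut_plus BB)) (f 0).
          by apply/compat; exists 0 => //; exact: lexx.
        by rewrite rmorph0.
      * exists 1%N; by rewrite normr_id mulr1n mul1r.
    + move/compat => [a Ba ha]; apply: nB1; apply: (Bc a) Ba _.
      have := ler_norm a; lra.
    + move=> z xz _ [b Bb hb]; apply: (key _ Bb); have := ler_norm z; lra.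
  have [V2full V2open] := cont _ fo2.
  have [N [hN [NB NV]]] := V2open _ hQ2.
  have [b [Bb Nb]] : exists b, BB b /\ N (pcut b).
    case: hN => [C1 [C2 [hN|[hN|hN]]]]; move/hN: (NB) => [l1 l2].
    + case: l1 => _ [b0 [[b Bb b0b] nb0]]; exists b; split => //; apply/hN; split.
      * apply: lt_pcut => Cb; apply: nb0; exact: cut_init b0b Cb.
      * exact: cut_lt_trans (pcut_lt_plus BBcg Bb h2 h2n) l2.
    + case: l1 => _ [b0 [[b Bb b0b] nb0]]; exists b; split => //; apply/hN; split.
      * apply: lt_pcut => Cb; apply: nb0; exact: cut_init b0b Cb.
      * right; exact: pcut_lt_top.
    + exists 0; split => //; apply/hN; split;
        [right; exact: bot_lt_pcut | exact: cut_lt_trans (pcut_lt_plus BBcg B0 h2 h2n) l2].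
  have [p [q [hp [hq hz]]]] := NV _ Nb.
  pose c := b + `|r2|.
  have Bc' : BB c.
    apply: BD => //; apply: (Bc r2) => //; by rewrite normr_id lexx.
  have fbD : cutD (iota (pcut b)) (f b) by apply/compat; apply/pcutE; exact: lexx.
  have fcD : ~ cutD (iota (pcut b)) (f c).
    move/compat/pcutE; rewrite /c; have : 0 < `|r2| by rewrite normr_gt0. lra.
  have fbq : f b < q.
    rewrite ltNge; apply/negP => h; apply: hq; exact: cut_init h fbD.
  have pfc : p < f c.
    rewrite ltNge; apply/negP => h; apply: fcD; exact: cut_init h hp.
  have pq : p <= q.
    rewrite leNgt; apply/negP => h; apply: hq; apply: cut_init hp; exact: ltW.
  case: (lerP p (f b)) => pb.
  + apply: (hz (f b) pb (ltW fbq)); exists b => //; exact: lexx.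
  + apply: (hz p (lexx p) pq).
    case: (between_norm (ltW pb) (ltW pfc)) => h; [exists b | exists c] => //.
Qed.

End Main.

Theorem proposition4p9 (R F : realFieldType) (f : {rmorphism R -> F})
  (f_mono : {mono f : x y / x <= y})
  (not_convex : ~ value_group_convex f) :
  ~ exists iota : cut R -> cut F,
      [/\ injective iota, full_continuous iota & compatible_restriction f iota].
Proof.
move=> [iota [_ cont compat]].
apply: not_convex => x hx r1 r2 h1n h2n h1 h2.
apply: NNPP => hno.
exact: (@contra R F f f_mono x r1 r2 hx h1n h2n h1 h2 hno iota cont compat).
Qed.
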